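(* Let $G_1$ and $G_2$ be graphs (each with at least two vertices) such that $\lambda(G_1)=-\iota(G_1)$ and $\lambda(G_2)=-\iota(G_2)$. Then $\lambda(G_1\Box G_2)=-\iota(G_1\Box G_2)$.
   Context: All graphs are finite and simple; $\lambda(G)$ denotes the smallest eigenvalue of the adjacency matrix of $G$. The average degree of a graph $T$ is $\overline{d}(T)=2|E(T)|/|V(T)|$, and $\iota(G)=\max\{\overline{d}(H): H \text{ an induced bipartite subgraph of } G\}$. The Cartesian product $G_1\Box G_2$ has vertex set $V(G_1)\times V(G_2)$, with $(v_1,w_1)$ adjacent to $(v_2,w_2)$ iff either $v_1=v_2$ and $\{w_1,w_2\}\in E(G_2)$, or $w_1=w_2$ and $\{v_1,v_2\}\in E(G_1)$. *)

(* Defs.v *)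
From HB Require Import structures.
From mathcomp Require Import all_boot all_order all_algebra.
From mathcomp Require Import reals.
Set Implicit Arguments. Unset Strict Implicit. Unset Printing Implicit Defensive.
Import Order.TTheory GRing.Theory Num.Theory.
Local Open Scope ring_scope.

Definition simple_graph (T : finType) (e : rel T) : Prop :=
  symmetric e /\ irreflexive e.

Definition adjmx (R : nzRingType) (T : finType) (e : rel T) : 'M[R]_#|T| :=
  \matrix_(i, j) (e (enum_val i) (enum_val j))%:R.

Definition is_smallest_eigenvalue (R : realType) (T : finType) (e : rel T)
    (l : R) : Prop :=
  eigenvalue (adjmx R e) l /\
  (forall m : R, eigenvalue (adjmx R e) m -> l <= m).

Definition induced_bipartite (T : finType) (e : rel T) (S : {set T}) : bool :=
  [exists A : {set T}, (A \subset S) &&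
     [forall x in S, forall y in S,
        e x y ==> ((x \in A) != (y \in A))]].

Definition induced_edges (T : finType) (e : rel T) (S : {set T}) : {set {set T}} :=
  [set E : {set T} | [exists x in S, exists y in S, e x y && (E == [set x; y])]].

Definition avg_degree (R : numFieldType) (T : finType) (e : rel T) (S : {set T}) : R :=
  (2 * #|induced_edges e S|)%:R / #|S|%:R.

(* iota(G): max average degree over (nonempty) induced bipartite subgraphs.
   The 0 default is harmless: singletons are bipartite with average degree 0. *)
Definition iota_graph (R : realType) (T : finType) (e : rel T) : R :=
  \big[Num.max/0]_(S : {set T} | (S != set0) && induced_bipartite e S) @avg_degree R T e S.

Definition cart_rel (T1 T2 : finType) (e1 : rel T1) (e2 : rel T2) : rel (T1 * T2) :=
  fun v w => ((v.1 == w.1) && e2 v.2 w.2) || ((v.2 == w.2) && e1 v.1 w.1).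

(* Main.v *)
From HB Require Import structures.
From mathcomp Require Import all_boot all_order all_algebra.
From mathcomp Require Import reals.
Require Import Defs.
From mathcomp Require Import sesquilinear spectral.
From mathcomp.real_closed Require Import complex.
From mathcomp.algebra_tactics Require Import ring.
Set Implicit Arguments. Unset Strict Implicit. Unset Printing Implicit Defensive.
Import Order.TTheory GRing.Theory Num.Theory.
Local Open Scope ring_scope.
Local Open Scope sesquilinear_scope.

Lemma herm_psd (C : numClosedFieldType) n (A : 'M[C]_n) (l : C) :
  A \is hermsymmx -> (forall i, l <= spectral_diag A 0 i) ->
  forall x : 'rV_n, l * (x *m x ^t* ) 0 0 <= (x *m A *m x ^t* ) 0 0.
Proof.
move=> Ah Hl x.
have /hermitian_normalmx /orthomx_spectralP eA := Ah.
have Uu : spectralmx A \is unitarymx := spectral_unitarymx A.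
move: eA Hl Uu; set U := spectralmx A; set d := spectral_diag A => eA Hl Uu.
rewrite invmx_unitary // in eA.
set y := x *m U^t*.
have Ey : y ^t* = U *m x ^t*.
  by rewrite /y trmx_mul map_mxM trmxCK.
have E1 : x *m A *m x^t* = y *m diag_mx d *m y^t*.
  by rewrite Ey eA /y !mulmxA.
have E2 : x *m x^t* = y *m y^t*.
  by rewrite Ey /y mulmxA mulmxKtV.
rewrite E1 E2 !mxE mulr_sumr; apply: ler_sum => i _.
rewrite mul_mx_diag !mxE -[X in _ <= X]mulrA.
rewrite [X in _ <= X]mulrCA.
by apply: ler_wpM2r; [rewrite mul_conjC_ge0 | exact: Hl].
Qed.

Lemma delta_diag (F : pzRingType) n (D : 'rV[F]_n) (i : 'I_n) :
  (delta_mx 0 i : 'rV[F]_n) *m diag_mx D = D 0 i *: delta_mx 0 i.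
Proof.
apply/matrixP => a b; rewrite mul_mx_diag !mxE.
case: (eqVneq b i) => [->|nib]; first by rewrite mulr_natl mulr_natr.
by rewrite andbF /= mul0r mulr0.
Qed.

Lemma sym_psd (R : realType) n (M : 'M[R]_n) (l : R) : M^T = M ->
  (forall m, eigenvalue M m -> l <= m) ->
  forall v : 'rV[R]_n, l * (v *m v^T) 0 0 <= (v *m M *m v^T) 0 0.
Proof.
move=> Msym Hl v.
pose f := real_complex R.
pose MC := map_mx f M.
have cf : forall r : R, Num.conj (f r) = f r.
  by move=> r; rewrite /f /= ; apply/eqP; rewrite eq_complex /= oppr0 !eqxx.
have MCh : MC \is hermsymmx.
  rewrite qualifE /=; apply/eqP/matrixP => i j.
  rewrite !mxE expr0 mul1r cf.
  by have /matrixP/(_ j i) := Msym; rewrite mxE => ->.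
have Hd : forall i, f l <= spectral_diag MC 0 i.
  move=> i; set d := spectral_diag MC 0 i.
  have dreal : d \is Num.real.
    exact: (mxOverP (hermitian_spectral_diag_real MCh)).
  have /hermitian_normalmx /orthomx_spectralP eA := MCh.
  have Uu := spectral_unit MC.
  have deig : eigenvalue MC d.
    apply/eigenvalueP; exists (delta_mx 0 i *m spectralmx MC).
      by rewrite {2}eA !mulmxA mulmxK // delta_diag -scalemxAl.
    apply/negP => /eqP h.
    move: (congr1 (mulmx^~ (invmx (spectralmx MC))) h) => /=.
    rewrite mulmxK // mul0mx => /matrixP /(_ 0 i); rewrite !mxE !eqxx /=.
    by move/eqP; rewrite oner_eq0.
  have dE : d = f (complex.Re d) by rewrite /f RRe_real.
  have : eigenvalue M (complex.Re d).
    move: deig; rewrite !eigenvalue_root_char {1}dE /MC -map_char_poly.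
    by rewrite fmorph_root.
  by move/Hl; rewrite dE lecR.
have := herm_psd MCh Hd (map_mx f v).
have Et : (map_mx f v) ^t* = map_mx f v^T.
  by apply/matrixP => a b; rewrite !mxE cf.
rewrite Et -!map_mxM !mxE -rmorphM /=.
by rewrite lecR.
Qed.
Section G.
Variable R : realType.
Variables (T : finType) (e : rel T).

Definition Qf (x : T -> R) := \sum_u \sum_w (e u w)%:R * x u * x w.
Definition Nf (x : T -> R) := \sum_u x u ^+ 2.
Definition eigf (m : R) (x : T -> R) := forall w, \sum_u x u * (e u w)%:R = m * x w.

Definition rowv (x : T -> R) : 'rV[R]_#|T| := \row_i x (enum_val i).

Lemma sum_enum (F : T -> R) : \sum_(i < #|T|) F (enum_val i) = \sum_t F t.
Proof. by rewrite -(big_enum_val F); apply: eq_bigl. Qed.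

Lemma adjmxE i j : adjmx R e i j = (e (enum_val i) (enum_val j))%:R.
Proof. by rewrite mxE. Qed.

Lemma eigenvalue_eigf m : eigenvalue (adjmx R e) m ->
  exists2 x, eigf m x & exists t, x t != 0.
Proof.
move/eigenvalueP => [v Hv vn0].
exists (fun t => v 0 (enum_rank t)).
  move=> w; have /matrixP/(_ 0 (enum_rank w)) := Hv.
  rewrite !mxE => <-; rewrite -sum_enum; apply: eq_bigr => i _.
  by rewrite adjmxE !enum_rankK enum_valK.
have [i vi] : exists i, v 0 i != 0.
  apply/existsP; apply: contraNT vn0; rewrite negb_exists => /forallP H.
  by apply/eqP/matrixP => a b; rewrite ord1 mxE; apply/eqP; have := H b; rewrite negbK.
by exists (enum_val i); rewrite enum_valK.
Qed.

Lemma eigf_eigenvalue m x t : eigf m x -> x t != 0 -> eigenvalue (adjmx R e) m.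
Proof.
move=> Hx xt; apply/eigenvalueP; exists (rowv x).
  apply/matrixP => a j; rewrite !mxE -Hx -sum_enum; apply: eq_bigr => i _.
  by rewrite !mxE.
apply: contra xt => /eqP/matrixP/(_ 0 (enum_rank t)); rewrite !mxE enum_rankK.
by move=> ->.
Qed.

Lemma vNf x : (rowv x *m (rowv x)^T) 0 0 = Nf x.
Proof.
rewrite /rowv mxE /Nf -sum_enum; apply: eq_bigr => i _; by rewrite !mxE expr2.
Qed.

Lemma vQf x : (rowv x *m adjmx R e *m (rowv x)^T) 0 0 = Qf x.
Proof.
rewrite /rowv mxE /Qf exchange_big -sum_enum; apply: eq_bigr => j _; rewrite !mxE.
rewrite mulr_suml -sum_enum; apply: eq_bigr => i _; rewrite !mxE.
by rewrite [x _ * _]mulrC.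
Qed.

Lemma psd_graph l : symmetric e ->
  (forall m, eigenvalue (adjmx R e) m -> l <= m) -> forall x, l * Nf x <= Qf x.
Proof.
move=> es Hl x; rewrite -vNf -vQf; apply: sym_psd => //.
by apply/matrixP => i j; rewrite !mxE es.
Qed.

Lemma eigf_Q m x : eigf m x -> Qf x = m * Nf x.
Proof.
move=> Hx; rewrite /Qf exchange_big /Nf mulr_sumr; apply: eq_bigr => w _.
rewrite expr2 mulrA -Hx mulr_suml; apply: eq_bigr => u _.
by rewrite [_ * x u]mulrC.
Qed.

Lemma Nf_gt0 x t : x t != 0 -> 0 < Nf x.
Proof.
move=> xt; rewrite /Nf (bigD1 t) //=; apply: ltr_pwDl.
  by rewrite lt0r sqrf_eq0 xt sqr_ge0.
by apply: sumr_ge0 => i _; rewrite sqr_ge0.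
Qed.

End G.
Section Count.
Variable R : realType.
Variables (T : finType) (e : rel T).
Hypotheses (es : symmetric e) (ei : irreflexive e).

Definition ind (S : {set T}) : T -> R := fun t => (t \in S)%:R.
Definition cnt (S : {set T}) :=
  #|[set p : T * T | [&& p.1 \in S, p.2 \in S & e p.1 p.2]]|.

Lemma Qf_ind S : Qf e (ind S) = (cnt S)%:R.
Proof.
rewrite /Qf.
transitivity (\sum_u \sum_w ([&& u \in S, w \in S & e u w] : nat)%:R : R).
  apply: eq_bigr => u _; apply: eq_bigr => w _; rewrite /ind -!natrM.
  by case: (e u w); case: (u \in S); case: (w \in S).
rewrite pair_big /= -natr_sum /cnt -sum1_card.
congr (_ %:R); rewrite [RHS]big_mkcond; apply: eq_bigr => p _; rewrite inE.
by case: [&& _, _ & _].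
Qed.

Lemma cnt_edges S : cnt S = 2 * #|induced_edges e S|.
Proof.
transitivity (#|induced_edges e S| * 2)%N; last exact: mulnC.
rewrite /cnt -sum1_card.
rewrite (partition_big (fun p : T * T => [set p.1; p.2]) (mem (induced_edges e S))) /=; last first.
  move=> [a b]; rewrite inE /= => /and3P [aS bS eab].
  by rewrite inE; apply/existsP; exists a; rewrite aS; apply/existsP; exists b; rewrite bS eab eqxx.
rewrite -sum_nat_const; apply: eq_bigr => E0.
rewrite inE => /existsP [x /andP [xS /existsP [y /and3P [yS exy /eqP ->]]]].
have xy : x != y by apply: contraTneq exy => ->; rewrite ei.
rewrite (eq_bigl (mem [set (x, y); (y, x)])); first last.
  move=> [a b]; rewrite !inE /= !xpair_eqE.
  apply/idP/idP.
    move=> /andP [/and3P [aS bS eab] /eqP E].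
    have ab : a != b by apply: contraTneq eab => ->; rewrite ei.
    have : a \in [set x; y] by rewrite -E !inE eqxx.
    have : b \in [set x; y] by rewrite -E !inE eqxx orbT.
    rewrite !inE => hb ha.
    case/orP: ha => /eqP ha; case/orP: hb => /eqP hb; subst a b;
      rewrite ?eqxx ?andbT ?orbT //; by rewrite eqxx in ab.
  case/orP => /andP [/eqP -> /eqP ->] /=.
    by rewrite xS yS exy eqxx.
  by rewrite xS yS es exy setUC eqxx.
rewrite sum1_card cards2.
by rewrite xpair_eqE negb_and xy.
Qed.

Lemma avg_cnt S : avg_degree R e S = (cnt S)%:R / #|S|%:R.
Proof. by rewrite /avg_degree cnt_edges. Qed.

End Count.
Lemma natr_andb (R : pzRingType) (b c : bool) : ((b && c)%:R : R) = b%:R * c%:R.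
Proof. by case: b; case: c; rewrite ?mul1r ?mul0r. Qed.

Lemma sum_delta (R : pzRingType) (I : finType) (i : I) (G : I -> R) :
  \sum_j (i == j)%:R * G j = G i.
Proof.
rewrite (bigD1 i) //= eqxx mul1r big1 ?addr0 // => j /negbTE.
by rewrite eq_sym => ->; rewrite mul0r.
Qed.

Lemma sum_pair (R : pzRingType) (T1 T2 : finType) (F : T1 * T2 -> R) :
  \sum_p F p = \sum_a \sum_b F (a, b).
Proof. by rewrite pair_bigA; apply: eq_bigr => [[a b]]. Qed.

Section Iota.
Variable R : realType.
Variables (T : finType) (e : rel T).
Hypotheses (es : symmetric e) (ei : irreflexive e).

Lemma sum_ind (S : {set T}) : \sum_t ind R S t = #|S|%:R.
Proof.
rewrite /ind -natr_sum -sum1_card [in RHS]big_mkcond /=.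
by congr (_ %:R); apply: eq_bigr => t _; case: (t \in S).
Qed.

Lemma Qf_ext (x y : T -> R) : (forall t, x t = y t) -> Qf e x = Qf e y.
Proof. by move=> h; apply: eq_bigr => u _; apply: eq_bigr => w _; rewrite !h. Qed.

Lemma Qf_scale (c : R) (y : T -> R) : Qf e (fun t => c * y t) = c ^+ 2 * Qf e y.
Proof.
rewrite /Qf mulr_sumr; apply: eq_bigr => u _; rewrite mulr_sumr.
by apply: eq_bigr => w _; rewrite expr2; ring.
Qed.

Lemma ind_sq (S : {set T}) t : ind R S t ^+ 2 = ind R S t.
Proof. by rewrite /ind; case: (t \in S); rewrite ?expr2 ?mulr1 ?mul0r. Qed.

Lemma bip_bound l (S : {set T}) : (forall x, l * Nf x <= Qf e x) -> S != set0 ->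
  induced_bipartite e S -> avg_degree R e S <= - l.
Proof.
move=> K Sn0 /existsP [A /andP [AS /forallP H]].
pose x t : R := if t \in S then (if t \in A then 1 else -1) else 0.
have NS : Nf x = #|S|%:R.
  rewrite -sum_ind /Nf; apply: eq_bigr => t _; rewrite /x /ind.
  by case: (t \in S); case: (t \in A); rewrite ?expr2 ?mulrNN ?mulr1 ?mul0r.
have QS : Qf e x = - Qf e (ind R S).
  rewrite /Qf -sumrN; apply: eq_bigr => u _; rewrite -sumrN; apply: eq_bigr => w _.
  rewrite /x /ind; case uS: (u \in S); case wS: (w \in S);
    rewrite ?mulr0 ?mul0r ?oppr0 //.
  case euw: (e u w); last by rewrite !mul0r oppr0.
  have := H u; rewrite uS /= => /forallP /(_ w); rewrite wS euw /=.
  by case: (u \in A); case: (w \in A); rewrite //= ?mulr1 ?mulrN1 ?opprK ?mulN1r.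
have S0 : (0 < #|S|)%N by rewrite card_gt0.
have K1 := K x; rewrite NS QS Qf_ind lerNr in K1.
rewrite (@avg_cnt R _ _ es ei) ler_pdivrMr ?ltr0n // mulNr.
exact: K1.
Qed.

Lemma avg_ge0 (S : {set T}) : 0 <= avg_degree R e S.
Proof. by rewrite /avg_degree divr_ge0 ?ler0n. Qed.

Lemma iota_ge0 : 0 <= iota_graph R e.
Proof. exact: bigmax_ge_id. Qed.

Lemma iota_le l : (forall x, l * Nf x <= Qf e x) -> 0 <= - l ->
  iota_graph R e <= - l.
Proof.
move=> K l0; apply: bigmax_le => // S /andP [Sn0 Sb].
exact: bip_bound.
Qed.

Lemma iota_ge (S : {set T}) : S != set0 -> induced_bipartite e S ->
  avg_degree R e S <= iota_graph R e.
Proof.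
move=> Sn0 Sb; rewrite /iota_graph.
by apply: (le_bigmax_cond _ (fun S => avg_degree R e S)); rewrite Sn0 Sb.
Qed.

Lemma iota_attained (t0 : T) : exists S, [/\ S != set0, induced_bipartite e S &
  iota_graph R e = avg_degree R e S].
Proof.
have P1 : ([set t0] != set0) && induced_bipartite e [set t0].
  apply/andP; split.
    by apply/set0Pn; exists t0; rewrite inE.
  apply/existsP; exists set0; rewrite sub0set /=.
  apply/forallP => u; apply/implyP; rewrite inE => /eqP ->.
  apply/forallP => w; apply/implyP; rewrite inE => /eqP ->.
  by rewrite ei.
rewrite /iota_graph (bigmax_eq_arg 0 [set t0] (fun S => (S != set0) && induced_bipartite e S) (fun S => avg_degree R e S) P1); last by move=> S' _; apply: avg_ge0.
case: arg_maxP => // S /andP [h1 h2] _.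
by exists S.
Qed.

End Iota.
Section Prod.
Variable R : realType.
Variables (T1 T2 : finType) (e1 : rel T1) (e2 : rel T2).
Hypotheses (es1 : symmetric e1) (ei1 : irreflexive e1).
Hypotheses (es2 : symmetric e2) (ei2 : irreflexive e2).
Local Notation cp := (cart_rel e1 e2).

Lemma cp_sym : symmetric cp.
Proof. by move=> [a b] [c d]; rewrite /cart_rel /= es1 es2 (eq_sym a) (eq_sym b). Qed.

Lemma cp_irr : irreflexive cp.
Proof. by move=> [a b]; rewrite /cart_rel /= ei1 ei2 !andbF. Qed.

Lemma cpE a b a' b' : ((cp (a, b) (a', b'))%:R : R) =
  (a == a')%:R * (e2 b b')%:R + (b == b')%:R * (e1 a a')%:R.
Proof.
rewrite /cart_rel /= -!natr_andb.
case: (eqVneq a a') => [->|]; case: (eqVneq b b') => [->|] /=;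
  by rewrite ?ei1 ?ei2 ?orbF ?addr0 ?add0r.
Qed.

Lemma Qf_prod (x : T1 * T2 -> R) : Qf cp x =
  \sum_a Qf e2 (fun b => x (a, b)) + \sum_b Qf e1 (fun a => x (a, b)).
Proof.
rewrite /Qf sum_pair.
transitivity (\sum_a \sum_b \sum_a' \sum_b'
   ((a == a')%:R * ((e2 b b')%:R * x (a, b) * x (a', b')) +
    (b == b')%:R * ((e1 a a')%:R * x (a, b) * x (a', b'))) : R).
  apply: eq_bigr => a _; apply: eq_bigr => b _; rewrite sum_pair.
  apply: eq_bigr => a' _; apply: eq_bigr => b' _.
  by rewrite cpE; ring.
rewrite [X in _ = _ + X]exchange_big /= -big_split; apply: eq_bigr => a _.
rewrite -big_split; apply: eq_bigr => b _.
under eq_bigr do rewrite big_split /=.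
rewrite big_split /=; congr (_ + _).
  by rewrite exchange_big; apply: eq_bigr => b' _; rewrite sum_delta.
by apply: eq_bigr => a' _; rewrite sum_delta.
Qed.

Lemma Nf_prod1 (x : T1 * T2 -> R) : Nf x = \sum_a Nf (fun b => x (a, b)).
Proof. by rewrite /Nf sum_pair. Qed.

Lemma Nf_prod2 (x : T1 * T2 -> R) : Nf x = \sum_b Nf (fun a => x (a, b)).
Proof. by rewrite /Nf sum_pair exchange_big. Qed.

Lemma psd_prod (l1 l2 : R) : (forall x, l1 * Nf x <= Qf e1 x) ->
  (forall x, l2 * Nf x <= Qf e2 x) ->
  forall x, (l1 + l2) * Nf x <= Qf cp x.
Proof.
move=> K1 K2 x; rewrite Qf_prod mulrDl addrC; apply: lerD.
  by rewrite Nf_prod1 mulr_sumr; apply: ler_sum => a _; apply: K2.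
by rewrite Nf_prod2 mulr_sumr; apply: ler_sum => b _; apply: K1.
Qed.

Lemma eig_prod m1 m2 x1 x2 : eigf e1 m1 x1 -> eigf e2 m2 x2 ->
  eigf cp (m1 + m2) (fun p => x1 p.1 * x2 p.2 : R).
Proof.
move=> H1 H2 [a b]; rewrite sum_pair /=.
transitivity (\sum_a' \sum_b' ((a == a')%:R * (x1 a' * (x2 b' * (e2 b' b)%:R)) +
   (b == b')%:R * (x2 b' * (x1 a' * (e1 a' a)%:R))) : R).
  apply: eq_bigr => a' _; apply: eq_bigr => b' _.
  by rewrite cpE (eq_sym a') (eq_sym b'); ring.
under eq_bigr do rewrite big_split /=.
rewrite big_split /=.
under eq_bigr do rewrite -mulr_sumr -mulr_sumr.
rewrite sum_delta.
under eq_bigr do rewrite sum_delta.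
rewrite -mulr_sumr H1 H2; ring.
Qed.

Lemma bip_prod S1 S2 : induced_bipartite e1 S1 -> induced_bipartite e2 S2 ->
  induced_bipartite cp (setX S1 S2).
Proof.
move=> /existsP [A1 /andP [A1S /forallP H1]] /existsP [A2 /andP [A2S /forallP H2]].
apply/existsP; exists ([set p | (p.1 \in A1) == (p.2 \in A2)] :&: setX S1 S2).
rewrite subsetIr /=.
apply/forallP => [[a b]]; apply/implyP; rewrite in_setX /= => /andP [aS bS].
apply/forallP => [[a' b']]; apply/implyP; rewrite in_setX /= => /andP [aS' bS'].
apply/implyP; rewrite /cart_rel /= !inE /= aS bS aS' bS' /= !andbT.
case/orP => /andP [/eqP <- ee].
  have := H2 b; rewrite bS /= => /forallP/(_ b'); rewrite bS' ee /=.
  by case: (a \in A1); case: (b \in A2); case: (b' \in A2).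
have := H1 a; rewrite aS /= => /forallP/(_ a'); rewrite aS' ee /=.
by case: (a \in A1); case: (a' \in A1); case: (b \in A2).
Qed.

Lemma avg_prod S1 S2 : S1 != set0 -> S2 != set0 ->
  avg_degree R cp (setX S1 S2) = avg_degree R e1 S1 + avg_degree R e2 S2.
Proof.
move=> n1 n2.
rewrite (@avg_cnt R _ cp cp_sym cp_irr) (@avg_cnt R _ e1 es1 ei1) (@avg_cnt R _ e2 es2 ei2).
rewrite -!Qf_ind cardsX natrM Qf_prod.
have E1 : forall a, Qf e2 (fun b => ind R (setX S1 S2) (a, b)) = ind R S1 a * Qf e2 (ind R S2).
  move=> a; rewrite -[ind R S1 a]ind_sq -Qf_scale; apply: Qf_ext => b.
  by rewrite /ind in_setX natr_andb.
have E2 : forall b, Qf e1 (fun a => ind R (setX S1 S2) (a, b)) = ind R S2 b * Qf e1 (ind R S1).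
  move=> b; rewrite -[ind R S2 b]ind_sq -Qf_scale; apply: Qf_ext => a.
  by rewrite /ind in_setX natr_andb mulrC.
under eq_bigr do rewrite E1.
under [X in _ + X]eq_bigr do rewrite E2.
rewrite -!mulr_suml !sum_ind.
have c1 : (#|S1|%:R : R) != 0 by rewrite pnatr_eq0 -lt0n card_gt0.
have c2 : (#|S2|%:R : R) != 0 by rewrite pnatr_eq0 -lt0n card_gt0.
by field; rewrite c1 c2.
Qed.

End Prod.
Unset Implicit Arguments.
Local Close Scope sesquilinear_scope.

Theorem proposition3p1 (R : realType) (T1 T2 : finType)
    (e1 : rel T1) (e2 : rel T2) :
  simple_graph e1 -> simple_graph e2 ->
  (1 < #|T1|)%N -> (1 < #|T2|)%N ->
  is_smallest_eigenvalue e1 (- @iota_graph R _ e1) ->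
  is_smallest_eigenvalue e2 (- @iota_graph R _ e2) ->
  is_smallest_eigenvalue (cart_rel e1 e2) (- @iota_graph R _ (cart_rel e1 e2)).
Proof.
move=> [es1 ei1] [es2 ei2] c1 c2 [ev1 min1] [ev2 min2].
have K1 := @psd_graph R _ e1 _ es1 min1.
have K2 := @psd_graph R _ e2 _ es2 min2.
have Kp := psd_prod ei1 ei2 K1 K2.
have esp := cp_sym es1 es2.
have eip := cp_irr ei1 ei2.
have /card_gt0P [t1 _] : (0 < #|T1|)%N by apply: ltnW.
have /card_gt0P [t2 _] : (0 < #|T2|)%N by apply: ltnW.
have [S1 [n1 b1 E1]] := iota_attained R ei1 t1.
have [S2 [n2 b2 E2]] := iota_attained R ei2 t2.
have Hge : iota_graph R e1 + iota_graph R e2 <= iota_graph R (cart_rel e1 e2).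
  rewrite E1 E2 -(avg_prod R es1 ei1 es2 ei2 n1 n2); apply: iota_ge.
    case/set0Pn: n1 => s1 s1in; case/set0Pn: n2 => s2 s2in.
    by apply/set0Pn; exists (s1, s2); rewrite in_setX s1in s2in.
  exact: bip_prod.
have Hle : iota_graph R (cart_rel e1 e2) <= iota_graph R e1 + iota_graph R e2.
  have := iota_le esp eip Kp; rewrite opprD !opprK; apply.
  by rewrite addr_ge0 // iota_ge0.
have Ep : - iota_graph R (cart_rel e1 e2) = - iota_graph R e1 + - iota_graph R e2.
  by rewrite -opprD; congr (- _); apply/le_anti; rewrite Hle Hge.
rewrite Ep; split.
  have [x1 h1 [s1 ns1]] := eigenvalue_eigf ev1.
  have [x2 h2 [s2 ns2]] := eigenvalue_eigf ev2.
  apply: (@eigf_eigenvalue _ _ _ _ _ (s1, s2) (eig_prod ei1 ei2 h1 h2)).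
  by rewrite mulf_neq0.
move=> m /eigenvalue_eigf [x hx [t nt]].
have := Kp x; rewrite (eigf_Q hx) => H.
by rewrite -(ler_pM2r (Nf_gt0 nt)).
Qed.
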